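(* Let $\Theta\subset\{1,\dots,n\}$ be non-empty. If $\Theta$ contains an odd integer, then the flag manifold $\mathcal F_\Theta$ of $\mathrm{Sp}(2n,\mathbb R)$ has Property (I).
   Context: $Je_i=(-1)^ie_{2n-i+1}$, $\omega(x,y)=x^TJy$, $\mathrm{Sp}(2n,\mathbb R)=\{g:g^TJg=J\}$. $\mathcal F_\Theta$ is the space of isotropic $\Theta$-flags $(V^i)_{i\in\Theta}$ ($V^i$ $\omega$-isotropic, $\dim V^i=i$, nested); flags $V,W$ are antipodal if $V^i\oplus (W^i)^{\perp_\omega}=\mathbb R^{2n}$ for all $i\in\Theta$, and $C(\tau)$ is the set of flags antipodal to $\tau$. $\tau_\Theta^i=\mathrm{Span}\{e_1,\dots,e_i\}$, $(\tau_\Theta^{\rm opp})^i=\mathrm{Span}\{e_{2n},\dots,e_{2n-i+1}\}$; $U_\Theta$ is the unipotent radical of the stabilizer $P_\Theta$ of $\tau_\Theta$, and each $\tau\in C(\tau_\Theta)$ is uniquely $u_\tau\tau^{\rm opp}_\Theta$ with $u_\tau\in U_\Theta$. The inversion map $\iota:C(\tau_\Theta)\to C(\tau_\Theta)$ is $\iota(\tau)=u_\tau^{-1}\tau^{\rm opp}_\Theta$; it preserves $C(\tau_\Theta)\cap C(\tau^{\rm opp}_\Theta)$. $\mathcal F_\Theta$ has Property (I) if $\iota$ leaves no connected component of $C(\tau_\Theta)\cap C(\tau^{\rm opp}_\Theta)$ invariant. *)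

(* Defs.v *)
From HB Require Import structures.
From mathcomp Require Import all_boot all_order all_algebra.
From mathcomp Require Import all_classical all_reals all_analysis.
Set Implicit Arguments. Unset Strict Implicit. Unset Printing Implicit Defensive.
Import Order.TTheory GRing.Theory Num.Theory.
Import numFieldNormedType.Exports.
Local Open Scope classical_set_scope.
Local Open Scope ring_scope.

(* Conventions: vectors of R^{2n} are ROW vectors 'rV_(n.*2); a linear subspace
   is the row space of a square matrix (mxalgebra, %MS scope).  A matrix g acts
   on column vectors x |-> g x, hence on row vectors v |-> v *m g^T, and on a
   subspace with row-matrix M by M |-> M *m g^T.  Indices are 0-based:
   the basis vector e_(a+1) of the paper is delta_mx 0 a. *)

Section SpDefs.
Variables (R : realType) (n : nat).
Local Notation N := (n.*2).
Local Notation M := 'M[R]_N.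

(* J e_i = (-1)^i e_{2n-i+1}: column b (i = b+1) has entry (-1)^(b+1) in row 2n-1-b. *)
Definition Jmat : M :=
  \matrix_(a < N, b < N) (if (a + b == N.-1)%N then (-1) ^+ b.+1 else 0).

Definition omega (x y : 'rV[R]_N) : R := (x *m Jmat *m y^T) 0 0.

Definition Sp : set M := [set g | g^T *m Jmat *m g = Jmat].

Definition isotropic (V : M) : Prop := V *m Jmat *m V^T = 0.

Definition operp (W : M) : M := kermx (Jmat *m W^T).

(* Points of Grassmannians are represented by orthogonal projection matrices
   (the standard embedding, which gives the Grassmannian its topology). *)
Definition is_oproj (P : M) : Prop := P^T = P /\ P *m P = P.

Definition oproj (A : M) : M := xget 0 [set P | is_oproj P /\ (P == A)%MS].

(* The space of (all) Theta-flags: families indexed by nat (with the product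
   topology), the i-th entry being the projection onto V^i for i in Theta and
   0 for i not in Theta. *)
Local Notation flagSpace := {ptws nat -> M}.

Definition is_flag (Theta : pred nat) (F : flagSpace) : Prop :=
  (forall i, Theta i -> [/\ is_oproj (F i), \rank (F i) = i & isotropic (F i)]) /\
  (forall i, ~~ Theta i -> F i = 0) /\
  (forall i j, Theta i -> Theta j -> (i <= j)%N -> (F i <= F j)%MS).

Definition FTheta (Theta : pred nat) : set flagSpace := [set F | is_flag Theta F].

Definition antipodal (Theta : pred nat) (V W : flagSpace) : Prop :=
  forall i, Theta i ->
    (V i + operp (W i) == (1%:M : M))%MS /\ (V i :&: operp (W i) == (0 : M))%MS.

Definition Cset (Theta : pred nat) (tau : flagSpace) : set flagSpace :=
  [set V | FTheta Theta V /\ antipodal Theta V tau].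

Definition Estd (i : nat) : M := \matrix_(a < N, b < N) (if (a == b) && (a < i)%N then 1 else 0).
Definition Eopp (i : nat) : M := \matrix_(a < N, b < N) (if (a == b) && (N - i <= a)%N then 1 else 0).

Definition tauTheta (Theta : pred nat) : flagSpace := fun i => if Theta i then Estd i else 0.
Definition tauOpp (Theta : pred nat) : flagSpace := fun i => if Theta i then Eopp i else 0.

Definition act (Theta : pred nat) (g : M) (F : flagSpace) : flagSpace :=
  fun i => if Theta i then oproj (F i *m g^T) else 0.

(* The self-dual partial flag of subspaces determined by tau_Theta:
   0, R^{2n}, tau^i and (tau^i)^{perp_omega} for i in Theta. *)
Definition chainSp (Theta : pred nat) : set M :=
  [set W | W = 0 \/ W = 1%:M \/
           exists i, Theta i /\ (W = Estd i \/ W = operp (Estd i))].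

(* U_Theta, the unipotent radical of the stabilizer P_Theta of tau_Theta in
   Sp(2n,R): the elements of Sp(2n,R) acting trivially on every successive
   quotient of the chain above, i.e. (g - 1) W <= W' whenever W' is the
   predecessor of W in the chain. *)
Definition Uunip (Theta : pred nat) : set M :=
  [set g | Sp g /\
     forall W W', chainSp Theta W -> chainSp Theta W' -> (W' < W)%MS ->
       (forall W'', chainSp Theta W'' -> ~ ((W' < W'')%MS && (W'' < W)%MS)) ->
       (W *m (g^T - 1%:M) <= W')%MS].

Definition u_of (Theta : pred nat) (tau : flagSpace) : M :=
  xget 1%:M [set u | Uunip Theta u /\ act Theta u (tauOpp Theta) = tau].

Definition iota (Theta : pred nat) (tau : flagSpace) : flagSpace :=
  act Theta (invmx (u_of Theta tau)) (tauOpp Theta).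

Definition Sset (Theta : pred nat) : set flagSpace :=
  Cset Theta (tauTheta Theta) `&` Cset Theta (tauOpp Theta).

Definition PropertyI (Theta : pred nat) : Prop :=
  forall x, Sset Theta x ->
    iota Theta @` @connected_component (flagSpace : topologicalType) (Sset Theta) x
      <> @connected_component (flagSpace : topologicalType) (Sset Theta) x.

End SpDefs.

(* Main.v *)
Require Import Defs.
From HB Require Import structures.
From mathcomp Require Import all_boot all_order all_algebra.
From mathcomp Require Import all_classical all_reals all_analysis.
From mathcomp Require Import zify ring lra.
Set Implicit Arguments. Unset Strict Implicit. Unset Printing Implicit Defensive.
Import Order.TTheory GRing.Theory Num.Theory.
Local Open Scope ring_scope.

Section Gen.
Variable R : comNzRingType.

Lemma mul_supp m N p k (X : 'M[R]_(m, N)) (Y : 'M[R]_(N, p)) (t : 'I_k -> 'I_N)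
  (P : pred 'I_N) : injective t -> (forall b, P b -> exists j, t j = b) ->
  (forall b, ~~ P b -> forall a c, X a b * Y b c = 0) ->
  X *m Y = colsub t X *m rowsub t Y.
Proof.
move=> tinj Psurj Pz; apply/matrixP => a c; rewrite !mxE.
rewrite (bigID (mem [set t j | j in [set: 'I_k]])) /=.
rewrite [X in _ + X]big1 ?addr0; last first.
  move=> b bn; apply: Pz; apply/negP => Pb; move: bn; case: (Psurj b Pb) => j <-.
  by rewrite imset_f ?inE.
rewrite big_imset /=; last by move=> x y _ _; apply: tinj.
by apply: eq_big => [j|j _]; rewrite ?inE ?mxE.
Qed.

Lemma mxsub_mulL m N p mm nn k (A : 'M[R]_(m, N)) (B : 'M[R]_(N, p)) f g
  (t : 'I_k -> 'I_N) (P : pred 'I_N) : injective t -> (forall b, P b -> exists j, t j = b) ->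
  (forall b, ~~ P b -> forall a : 'I_mm, A (f a) b = 0) ->
  mxsub f g (A *m B) = mxsub f t A *m mxsub t g B :> 'M[R]_(mm, nn).
Proof.
move=> tinj Ps Pz; rewrite mxsub_mul (mul_supp tinj Ps).
  by congr (_ *m _); apply/matrixP => a b; rewrite !mxE.
by move=> b nb a c; rewrite !mxE Pz // mul0r.
Qed.

Lemma mxsub_mulR m N p mm nn k (A : 'M[R]_(m, N)) (B : 'M[R]_(N, p)) f g
  (t : 'I_k -> 'I_N) (P : pred 'I_N) : injective t -> (forall b, P b -> exists j, t j = b) ->
  (forall b, ~~ P b -> forall c : 'I_nn, B b (g c) = 0) ->
  mxsub f g (A *m B) = mxsub f t A *m mxsub t g B :> 'M[R]_(mm, nn).
Proof.
move=> tinj Ps Pz; rewrite mxsub_mul (mul_supp tinj Ps).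
  by congr (_ *m _); apply/matrixP => a b; rewrite !mxE.
by move=> b nb a c; rewrite !mxE Pz // mulr0.
Qed.

Lemma mxsubN m n mm nn f g (A : 'M[R]_(m, n)) :
  mxsub f g (- A) = - mxsub f g A :> 'M[R]_(mm, nn).
Proof. by apply/matrixP => a b; rewrite !mxE. Qed.

Lemma detN k (A : 'M[R]_k) : \det (- A) = (-1) ^+ k * \det A.
Proof. by rewrite -scaleN1r detZ. Qed.

End Gen.
Arguments mxsub_mulL {R m N p mm nn k A B f g} t P.
Arguments mxsub_mulR {R m N p mm nn k A B f g} t P.


Section Blocks.
Variables (R : realType) (n i : nat).
Hypotheses (Hi : (i <= n)%N) (Hi0 : (0 < i)%N).
Local Notation N := (n.*2).
Local Notation J := (Jmat R n).

Lemma iN : (i <= N)%N. Proof. lia. Qed.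
Definition lo (a : 'I_i) : 'I_N := widen_ord iN a.
Lemma hi_lt (a : 'I_i) : (N - i + a < N)%N. Proof. have := ltn_ord a; lia. Qed.
Definition hi (a : 'I_i) : 'I_N := Ordinal (hi_lt a).

Lemma lo_inj : injective lo.
Proof. by move=> a b /(congr1 val) /= /val_inj. Qed.
Lemma hi_inj : injective hi.
Proof. move=> a b /(congr1 val) /= H; apply/val_inj => /=; lia. Qed.
Lemma lo_surj (b : 'I_N) : (b < i)%N -> exists j, lo j = b.
Proof. by move=> bi; exists (Ordinal bi); apply/val_inj. Qed.
Lemma hi_surj (b : 'I_N) : (N - i <= b)%N -> exists j, hi j = b.
Proof.
move=> bi; have lt : (b - (N - i) < i)%N by have := ltn_ord b; lia.
by exists (Ordinal lt); apply/val_inj => /=; lia.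
Qed.

Lemma Jsupp (a b : 'I_N) : J a b != 0 -> (a + b = N.-1)%N.
Proof. rewrite mxE; case: ifP => [/eqP //|_]; by rewrite eqxx. Qed.

Lemma J_lo_row (a : 'I_i) (b : 'I_N) : ~~ (N - i <= b)%N -> J (lo a) b = 0.
Proof.
move=> hb; apply/eqP; apply: contraNT hb => /Jsupp /=.
have := ltn_ord a; lia.
Qed.
Lemma J_hi_row (a : 'I_i) (b : 'I_N) : ~~ (b < i)%N -> J (hi a) b = 0.
Proof.
move=> hb; apply/eqP; apply: contraNT hb => /Jsupp /=.
have := ltn_ord a; have := ltn_ord b; lia.
Qed.
Lemma J_hi_col (a : 'I_i) (b : 'I_N) : ~~ (b < i)%N -> J b (hi a) = 0.
Proof.
move=> hb; apply/eqP; apply: contraNT hb => /Jsupp /=.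
have := ltn_ord a; have := ltn_ord b; lia.
Qed.

Lemma JJ : J *m J = - 1%:M.
Proof.
apply/matrixP => a c; rewrite !mxE (bigD1 (rev_ord a)) //= big1 ?addr0; last first.
  move=> b nb; rewrite !mxE; case: eqP => [h|_]; last by rewrite mul0r.
  by case/eqP: nb; apply/val_inj => /=; have := ltn_ord a; lia.
rewrite !mxE /=.
have -> : (a + (N - a.+1) == N.-1)%N by apply/eqP; have := ltn_ord a; lia.
have -> : (N - a.+1 + c == N.-1)%N = (a == c).
  apply/eqP/eqP => [h|<-]; [apply/val_inj => /=|]; have := ltn_ord a; have := ltn_ord c; lia.
case: eqP => [<-|_]; last by rewrite mulr0 oppr0.
rewrite -exprD -signr_odd.
have -> : ((N - a.+1).+1 + a.+1 = N.+1)%N by have := ltn_ord a; lia.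
by rewrite /= odd_double expr1.
Qed.


Local Notation S1 := (mxsub hi lo J).
Local Notation S2 := (mxsub lo hi J).

Lemma mxsub_hh1 : mxsub hi hi (1%:M : 'M[R]_N) = 1%:M.
Proof. by apply/matrixP => a b; rewrite !mxE (inj_eq hi_inj). Qed.

Lemma S1S2 : S1 *m S2 = - 1%:M.
Proof.
rewrite -(mxsub_mulL lo (fun b => (b < i)%N)) //.
- by rewrite JJ mxsubN mxsub_hh1.
- exact: lo_inj.
- exact: lo_surj.
- by move=> b nb a; apply: J_hi_row.
Qed.

Lemma detS1S2 : \det S1 * \det S2 = (-1) ^+ i.
Proof. by rewrite -det_mulmx S1S2 detN det1 mulr1. Qed.

Lemma detS2_neq0 : \det S2 != 0.
Proof.
apply/eqP => h; have := detS1S2; rewrite h mulr0 => /eqP.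
by rewrite eq_sym signr_eq0.
Qed.

Lemma Sp_block (u : 'M[R]_N) : u^T *m J *m u = J ->
  (forall (a : 'I_i) (b : 'I_N), ~~ (b < i)%N -> u b (lo a) = 0) ->
  \det (mxsub lo lo u) * \det (mxsub hi hi u) = 1.
Proof.
move=> Sp Hu.
have E : S2 = (mxsub lo lo u)^T *m S2 *m mxsub hi hi u.
  rewrite -{1}Sp -mulmxA (mxsub_mulL lo (fun b => (b < i)%N)).
  - rewrite (mxsub_mulL hi (fun b => (N - i <= b)%N)).
    + by rewrite mulmxA trmx_mxsub.
    + exact: hi_inj.
    + exact: hi_surj.
    + by move=> b nb a; apply: J_lo_row.
  - exact: lo_inj.
  - exact: lo_surj.
  - by move=> b nb a; rewrite mxE Hu.
have := congr1 determinant E; rewrite !det_mulmx det_tr => h.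
have nz := detS2_neq0.
apply: (mulfI nz); rewrite mulr1 [RHS]h; ring.
Qed.

Lemma Y_lohi (u : 'M[R]_N) :
  mxsub lo hi (J *m u^T *m J) = S2 *m (mxsub lo hi u)^T *m S2.
Proof.
rewrite (mxsub_mulR lo (fun b => (b < i)%N)).
- rewrite (mxsub_mulL hi (fun b => (N - i <= b)%N)).
  + by rewrite trmx_mxsub.
  + exact: hi_inj.
  + exact: hi_surj.
  + by move=> b nb a; apply: J_lo_row.
- exact: lo_inj.
- exact: lo_surj.
- by move=> b nb a; apply: J_hi_col.
Qed.

Lemma Y_hh (u : 'M[R]_N) :
  mxsub hi hi (J *m u^T *m J) = S1 *m (mxsub lo lo u)^T *m S2.
Proof.
rewrite (mxsub_mulR lo (fun b => (b < i)%N)).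
- rewrite (mxsub_mulL lo (fun b => (b < i)%N)).
  + by rewrite trmx_mxsub.
  + exact: lo_inj.
  + exact: lo_surj.
  + by move=> b nb a; apply: J_hi_row.
- exact: lo_inj.
- exact: lo_surj.
- by move=> b nb a; apply: J_hi_col.
Qed.

Lemma detY_lohi (u : 'M[R]_N) :
  \det (mxsub lo hi (- (J *m u^T *m J))) = (-1) ^+ i * \det S2 ^+ 2 * \det (mxsub lo hi u).
Proof. rewrite mxsubN detN Y_lohi !det_mulmx det_tr; ring. Qed.

Lemma detY_hh (u : 'M[R]_N) :
  \det (mxsub hi hi (- (J *m u^T *m J))) = \det (mxsub lo lo u).
Proof.
rewrite mxsubN detN Y_hh !det_mulmx det_tr.
have := detS1S2 => h.
have -> : (-1) ^+ i * (\det S1 * \det (mxsub lo lo u) * \det S2) =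
  (-1) ^+ i * (\det S1 * \det S2) * \det (mxsub lo lo u) :> R by ring.
by rewrite h -expr2 sqrr_sign mul1r.
Qed.

End Blocks.

Section Flags.
Variables (R : realType) (n i : nat).
Hypotheses (Hi : (i <= n)%N) (Hi0 : (0 < i)%N).
Local Notation N := (n.*2).
Local Notation J := (Jmat R n).
Local Notation lo := (lo Hi Hi0).
Local Notation hi := (hi Hi Hi0).

Lemma EoppM (M : 'M[R]_N) a b :
  (Eopp R n i *m M) a b = if (N - i <= a)%N then M a b else 0.
Proof.
rewrite mxE (bigD1 a) //= big1 ?addr0 => [|c ca]; rewrite !mxE ?eqxx /=.
  by case: ifP; rewrite ?mul1r ?mul0r.
by rewrite eq_sym (negbTE ca) mul0r.
Qed.

Lemma EstdM (M : 'M[R]_N) a b :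
  (Estd R n i *m M) a b = if (a < i)%N then M a b else 0.
Proof.
rewrite mxE (bigD1 a) //= big1 ?addr0 => [|c ca]; rewrite !mxE ?eqxx /=.
  by case: ifP; rewrite ?mul1r ?mul0r.
by rewrite eq_sym (negbTE ca) mul0r.
Qed.

Lemma Eopp_rowsub (M : 'M[R]_N) : (Eopp R n i *m M == rowsub hi M)%MS.
Proof.
apply/andP; split.
  apply/row_subP => a; case: (boolP (N - i <= a)%N) => h.
    have [j <-] := hi_surj Hi Hi0 h.
    have -> : row (hi j) (Eopp R n i *m M) = row j (rowsub hi M).
      by apply/rowP => b; rewrite [LHS]mxE EoppM /= leq_addr !mxE.
    exact: row_sub.
  have -> : row a (Eopp R n i *m M) = 0.
    by apply/rowP => b; rewrite [LHS]mxE EoppM (negbTE h) mxE.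
  exact: sub0mx.
have -> : rowsub hi M = rowsub hi (Eopp R n i *m M).
  apply/matrixP => a b; rewrite [RHS]mxE EoppM /= leq_addr mxE //.
exact: rowsub_sub.
Qed.

Lemma oproj_ok (A : 'M[R]_N) : \rank (oproj A) = i ->
  is_oproj (oproj A) /\ (oproj A == A)%MS.
Proof.
move=> rk; case: (pselect (exists P, is_oproj P /\ (P == A)%MS)) => [ex|nex].
  exact: (xgetPex 0 ex).
move: rk; rewrite /oproj xgetPN ?mxrank0; first lia.
by move=> P HP; apply: nex; exists P.
Qed.

Lemma proj_form (P : 'M[R]_N) (B : 'M[R]_(i, N)) :
  is_oproj P -> row_free B -> (P == B)%MS ->
  exists Q : 'M[R]_i, P = B^T *m Q *m B /\ Q \in unitmx.
Proof.
move=> [Psym Pid] Bfree /andP[PleB BleP].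
have [K PK] := submxP PleB.
have [E BE] := submxP BleP.
have BP : B *m P = B by rewrite {1}BE -mulmxA Pid -BE.
have BK : B *m K = 1%:M.
  by apply: (row_free_inj Bfree); rewrite /= mul1mx -mulmxA -PK BP.
have PT : P = B^T *m K^T by rewrite -Psym PK trmx_mul.
have PQ : P = B^T *m (K^T *m K) *m B.
  by rewrite -{1}Pid {1}PT PK !mulmxA.
exists (K^T *m K); split => //.
have H1 : B *m B^T *m (K^T *m K) = 1%:M.
  apply: (row_free_inj Bfree); rewrite /= mul1mx -[in RHS]BP.
  by rewrite [in RHS]PQ !mulmxA.
by case: (mulmx1_unit H1).
Qed.


Definition sgnf (P : 'M[R]_N) : R := \det (mxsub lo hi P) * \det (mxsub lo lo P).

Lemma mxsub_BQB f g (B : 'M[R]_(i, N)) (Q : 'M[R]_i) :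
  mxsub f g (B^T *m Q *m B) = (colsub f B)^T *m Q *m colsub g B :> 'M[R]_i.
Proof. by rewrite mxsub_mul -mul_rowsub_mx trmx_mxsub. Qed.

Lemma sgnf_form (P : 'M[R]_N) (B : 'M[R]_(i, N)) :
  is_oproj P -> row_free B -> (P == B)%MS ->
  exists q : R, (q != 0) /\ (sgnf P = \det (colsub lo B) ^+ 3 * \det (colsub hi B) * q ^+ 2).
Proof.
move=> Po Bf PB; have [Q [PQ Qu]] := proj_form Po Bf PB.
exists (\det Q); split; first by rewrite -unitfE -unitmxE.
rewrite /sgnf PQ !mxsub_BQB !det_mulmx !det_tr; ring.
Qed.

Lemma act_i (Theta : pred nat) (g : 'M[R]_N) : Theta i ->
  act Theta g (tauOpp R n Theta) i = oproj (Eopp R n i *m g^T).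
Proof. by move=> hT; rewrite /act /tauOpp hT. Qed.

Lemma sform_act (Theta : pred nat) (g : 'M[R]_N) : Theta i ->
  \rank (act Theta g (tauOpp R n Theta) i) = i ->
  exists q : R, sgnf (act Theta g (tauOpp R n Theta) i) =
     \det (mxsub lo hi g) ^+ 3 * \det (mxsub hi hi g) * q ^+ 2.
Proof.
move=> hT; rewrite act_i // => rk.
have [Po PA] := oproj_ok rk.
have PB : (oproj (Eopp R n i *m g^T) == rowsub hi g^T)%MS.
  apply/eqmxP; exact: eqmx_trans (eqmxP PA) (eqmxP (Eopp_rowsub _)).
have Bf : row_free (rowsub hi g^T) by rewrite /row_free -(eqmx_rank PB) rk.
have [q [_ ->]] := sgnf_form Po Bf PB; exists q.
have E : forall f : 'I_i -> 'I_N, colsub f (rowsub hi g^T) = (mxsub f hi g)^T.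
  by move=> f; apply/matrixP => a b; rewrite !mxE.
by rewrite !E !det_tr.
Qed.

Lemma hiblock_nz (V : 'M[R]_N) (B : 'M[R]_(i, N)) : row_free B -> (V == B)%MS ->
  (V :&: operp (Estd R n i) == (0 : 'M[R]_N))%MS -> \det (colsub hi B) != 0.
Proof.
move=> Bf /andP[_ BV] /andP[capz _]; apply/negP => /det0P [y ny yB].
set v := y *m B.
have vnz : v != 0 by rewrite /v mulmx_free_eq0.
have vhi : forall k, v 0 (hi k) = 0.
  move=> k; rewrite mulmx_colsub in yB.
  by have := congr1 (fun M : 'M[R]_(1, i) => M 0 k) yB; rewrite !mxE.
have vb : forall b : 'I_N, (N - i <= b)%N -> v 0 b = 0.
  by move=> b /(hi_surj Hi Hi0) [k <-].
have vJ : forall c : 'I_N, (c < i)%N -> (v *m J) 0 c = 0.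
  move=> c ci; rewrite mxE big1 // => b _; rewrite [J b c]mxE.
  case: ifP => [/eqP h|_]; last by rewrite mulr0.
  by rewrite vb ?mul0r //; have := ltn_ord c; have := ltn_ord b; lia.
have vsub : (v <= operp (Estd R n i))%MS.
  rewrite /operp sub_kermx mulmxA; apply/eqP/matrixP => a d.
  rewrite [a]ord1 [RHS]mxE mxE big1 // => c _.
  case: (ltnP c i) => ci; first by rewrite vJ ?mul0r.
  rewrite !mxE; case: eqP => [->|_]; last by rewrite mulr0.
  by rewrite ltnNge ci /= mulr0.
have : (v <= V :&: operp (Estd R n i))%MS.
  by rewrite sub_capmx vsub andbT (submx_trans (submxMl y B) BV).
move/(submx_trans)/(_ capz); rewrite submx0 => /eqP v0.
by move: vnz; rewrite v0 eqxx.
Qed.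

Lemma loblock_nz (V : 'M[R]_N) (B : 'M[R]_(i, N)) : row_free B -> (V == B)%MS ->
  (V :&: operp (Eopp R n i) == (0 : 'M[R]_N))%MS -> \det (colsub lo B) != 0.
Proof.
move=> Bf /andP[_ BV] /andP[capz _]; apply/negP => /det0P [y ny yB].
set v := y *m B.
have vnz : v != 0 by rewrite /v mulmx_free_eq0.
have vlo : forall k, v 0 (lo k) = 0.
  move=> k; rewrite mulmx_colsub in yB.
  by have := congr1 (fun M : 'M[R]_(1, i) => M 0 k) yB; rewrite !mxE.
have vb : forall b : 'I_N, (b < i)%N -> v 0 b = 0.
  by move=> b /(lo_surj Hi Hi0) [k <-].
have vJ : forall c : 'I_N, (N - i <= c)%N -> (v *m J) 0 c = 0.
  move=> c ci; rewrite mxE big1 // => b _; rewrite [J b c]mxE.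
  case: ifP => [/eqP h|_]; last by rewrite mulr0.
  by rewrite vb ?mul0r //; have := ltn_ord c; have := ltn_ord b; lia.
have vsub : (v <= operp (Eopp R n i))%MS.
  rewrite /operp sub_kermx mulmxA; apply/eqP/matrixP => a d.
  rewrite [a]ord1 [RHS]mxE mxE big1 // => c _.
  case: (leqP (N - i) c) => ci; first by rewrite vJ ?mul0r.
  rewrite !mxE; case: eqP => [->|_]; last by rewrite mulr0.
  by rewrite leqNgt ci /= mulr0.
have : (v <= V :&: operp (Eopp R n i))%MS.
  by rewrite sub_capmx vsub andbT (submx_trans (submxMl y B) BV).
move/(submx_trans)/(_ capz); rewrite submx0 => /eqP v0.
by move: vnz; rewrite v0 eqxx.
Qed.

Lemma sgnf_nz (Theta : pred nat) (F : {ptws nat -> 'M[R]_N}) :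
  Sset Theta F -> Theta i -> sgnf (F i) != 0.
Proof.
move=> [[[H1 _] antiT] [_ antiO]] hT.
have [Po rk _] := H1 i hT.
have [B [Bf FB]] : exists B : 'M[R]_(i, N), row_free B /\ (F i == B)%MS.
  move: (row_base (F i)) (eq_row_base (F i)) (row_base_free (F i)).
  rewrite rk => B eB fB; exists B; split => //; apply/eqmxP; exact: eqmx_sym eB.
have [q [qnz ->]] := sgnf_form Po Bf FB.
have [_ cT] := antiT i hT; have [_ cO] := antiO i hT.
rewrite /tauTheta /tauOpp hT in cT cO.
have h1 := loblock_nz Bf FB cO.
have h2 := hiblock_nz Bf FB cT.
by rewrite !mulf_neq0 // expf_neq0.
Qed.

End Flags.

Section Sign.
Variables (R : realType) (n i : nat).
Hypotheses (Hi : (i <= n)%N) (Hi0 : (0 < i)%N).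
Local Notation N := (n.*2).
Local Notation J := (Jmat R n).
Local Notation lo := (lo Hi Hi0).
Local Notation hi := (hi Hi Hi0).
Local Notation sgnf := (sgnf Hi Hi0).

Lemma stab (Theta : pred nat) (u : 'M[R]_N) : Uunip Theta u -> Theta i ->
  forall (a : 'I_i) (b : 'I_N), ~~ (b < i)%N -> u b (lo a) = 0.
Proof.
move=> [Spu Hu] hT.
set W := Estd R n i.
have cW : chainSp Theta W by right; right; exists i; split => //; left.
have c0 : chainSp Theta (0 : 'M[R]_N) by left.
have W0 : ((0 : 'M[R]_N) < W)%MS.
  rewrite ltmxErank sub0mx mxrank0 lt0n mxrank_eq0 /=.
  apply/negP => /eqP W0.
  have := congr1 (fun M : 'M[R]_N => M (lo (Ordinal Hi0)) (lo (Ordinal Hi0))) W0.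
  by rewrite !mxE eqxx /= Hi0 => /eqP; rewrite oner_eq0.
have [W' [cW' [ltW' nob]]] : exists W', chainSp Theta W' /\ (W' < W)%MS /\
    (forall W'', chainSp Theta W'' -> ~ ((W' < W'')%MS && (W'' < W)%MS)).
  apply: contrapT => H.
  have step : forall W1, chainSp Theta W1 -> (W1 < W)%MS ->
      exists W2, chainSp Theta W2 /\ (W1 < W2)%MS /\ (W2 < W)%MS.
    move=> W1 c1 l1; apply: contrapT => H2; apply: H; exists W1; do 2 split => //.
    by move=> W2 c2 /andP[l2 l3]; apply: H2; exists W2.
  have big : forall k, exists W1, chainSp Theta W1 /\ (W1 < W)%MS /\ (k <= \rank W1)%N.
    elim=> [|k [W1 [c1 [l1 r1]]]]; first by exists 0.
    have [W2 [c2 [l2 l3]]] := step W1 c1 l1; exists W2; split => //; split => //.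
    by have := rank_ltmx l2; lia.
  have [W1 [_ [_ r]]] := big N.+1; have := rank_leq_col W1; lia.
have H1 := Hu W W' cW cW' ltW' nob.
have WuW : (W *m u^T <= W)%MS.
  have -> : W *m u^T = W *m (u^T - 1%:M) + W by rewrite mulmxBr mulmx1 subrK.
  by rewrite addmx_sub // (submx_trans H1 (ltmxW ltW')).
move=> a b nb.
have r : (row (lo a) (W *m u^T) <= W)%MS := submx_trans (row_sub _ _) WuW.
have [z zE] := submxP r.
have := congr1 (fun M : 'M[R]_(1, N) => M 0 b) zE.
rewrite [LHS]mxE EstdM /=.
have -> : (lo a < i)%N by exact: (ltn_ord a).
rewrite mxE => ->; rewrite mxE big1 // => c _; rewrite mxE.
by case: eqP => [->|_]; rewrite ?(negbTE nb) ?mulr0.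
Qed.

Lemma Sp_inv (u : 'M[R]_N) : Sp u ->
  u \in unitmx /\ invmx u = - (J *m u^T *m J).
Proof.
rewrite /Sp /= => Spu.
have Yu : - (J *m u^T *m J) *m u = 1%:M.
  by rewrite mulNmx -!mulmxA (mulmxA u^T) Spu (JJ R Hi Hi0) opprK.
have [_ uU] := mulmx1_unit Yu; split => //.
by rewrite -[LHS]mul1mx -Yu -(mulmxA (- (J *m u^T *m J)) u (invmx u)) mulmxV // mulmx1.
Qed.

Lemma sign_flip (Theta : pred nat) (x : {ptws nat -> 'M[R]_N}) :
  Theta i -> odd i -> Sset Theta x -> Sset Theta (Defs.iota Theta x) ->
  sgnf (x i) * sgnf (Defs.iota Theta x i) < 0.
Proof.
move=> hT oi Sx SG.
have nzx := sgnf_nz Hi Hi0 Sx hT; have nzG := sgnf_nz Hi Hi0 SG hT.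
have nzp := mulf_neq0 nzx nzG.
have rkG : \rank (Defs.iota Theta x i) = i.
  by case: SG => [[[H1 _] _] _]; have [_ rk _] := H1 i hT.
have rkx : \rank (x i) = i.
  by case: Sx => [[[H1 _] _] _]; have [_ rk _] := H1 i hT.
rewrite lt_neqAle nzp /=.
move: rkG nzG; rewrite /Defs.iota.
case: (pselect (exists u, Uunip Theta u /\ act Theta u (tauOpp R n Theta) = x)) => [ex|nex].
  have [Uu ux] : Uunip Theta (u_of Theta x) /\
      act Theta (u_of Theta x) (tauOpp R n Theta) = x := xgetPex 1%:M ex.
  set u := u_of Theta x in Uu ux *.
  have [Spu _] := Uu; have [uU ->] := Sp_inv Spu.
  move=> rkG _.
  have [q1 ->] := sform_act Hi Hi0 hT rkG.
  have rkx' : \rank (act Theta u (tauOpp R n Theta) i) = i by rewrite ux.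
  have [q0 E0] := sform_act Hi Hi0 hT rkx'.
  rewrite ux in E0; rewrite E0 (detY_lohi Hi Hi0) (detY_hh Hi Hi0).
  have AD := Sp_block Spu (stab Uu hT).
  rewrite -signr_odd oi expr1.
  set c := \det (mxsub lo hi u); set s2 := \det (mxsub lo hi J).
  set A := \det (mxsub lo lo u); set D := \det (mxsub hi hi u).
  have -> : c ^+ 3 * D * q0 ^+ 2 * ((-1 * s2 ^+ 2 * c) ^+ 3 * A * q1 ^+ 2) =
     - ((c ^+ 3 * s2 ^+ 3 * q0 * q1) ^+ 2) * (A * D) by rewrite /A /D; ring.
  by rewrite AD mulr1 oppr_le0 sqr_ge0.
have -> : u_of Theta x = 1%:M.
  by apply: xgetPN => u Hu; apply: nex; exists u.
rewrite invmx1 => rkG.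
have [q1 ->] := sform_act Hi Hi0 hT rkG.
have -> : \det (mxsub lo hi (1%:M : 'M[R]_N)) = 0.
  have -> : mxsub lo hi (1%:M : 'M[R]_N) = 0.
    apply/matrixP => a b; rewrite !mxE.
    case: eqP => // /(congr1 val) /=; have := ltn_ord a; lia.
  apply/eqP/det0P; exists (const_mx 1); last by rewrite mulmx0.
  apply/negP => /eqP /matrixP /(_ 0 (Ordinal Hi0)); rewrite !mxE => /eqP.
  by rewrite oner_eq0.
by rewrite expr0n /= !mul0r eqxx.
Qed.

End Sign.

Import numFieldNormedType.Exports.
Local Open Scope classical_set_scope.
Local Open Scope ring_scope.

Section Topo.
Variable R : realType.

Lemma cont_entry m p (a : 'I_m) (b : 'I_p) :
  continuous (fun M : 'M[R]_(m, p) => M a b).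
Proof.
move=> M U /= HU.
exists (fun i j => if (i == a) && (j == b) then U else setT) => [i j|N HN].
  case: ifP => [/andP[/eqP -> /eqP ->] //|_]; exact: filterT.
by have := HN a b; rewrite !eqxx.
Qed.

Variable T : topologicalType.

Lemma cont_sum (I : Type) (r : seq I) (P : pred I) (F : I -> T -> R) :
  (forall j, continuous (F j)) -> continuous (fun t => \sum_(j <- r | P j) F j t).
Proof.
move=> Fc; elim: r => [|j r IH].
  have -> : (fun t => \sum_(j <- [::] | P j) F j t) = fun=> 0.
    by apply: funext => t; rewrite big_nil.
  exact: cst_continuous.
have -> : (fun t => \sum_(k <- j :: r | P k) F k t) =
   fun t => (if P j then F j t else 0) + \sum_(k <- r | P k) F k t.
  by apply: funext => t; rewrite big_cons; case: ifP; rewrite ?add0r.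
move=> t; apply: continuousD; last exact: IH.
by case: (P j); [exact: Fc | exact: cst_continuous].
Qed.

Lemma cont_prod (I : Type) (r : seq I) (P : pred I) (F : I -> T -> R) :
  (forall j, continuous (F j)) -> continuous (fun t => \prod_(j <- r | P j) F j t).
Proof.
move=> Fc; elim: r => [|j r IH].
  have -> : (fun t => \prod_(j <- [::] | P j) F j t) = fun=> 1.
    by apply: funext => t; rewrite big_nil.
  exact: cst_continuous.
have -> : (fun t => \prod_(k <- j :: r | P k) F k t) =
   fun t => (if P j then F j t else 1) * \prod_(k <- r | P k) F k t.
  by apply: funext => t; rewrite big_cons; case: ifP; rewrite ?mul1r.
move=> t; apply: continuousM; last exact: IH.
by case: (P j); [exact: Fc | exact: cst_continuous].
Qed.

Lemma cont_mul (f g : T -> R) : continuous f -> continuous g ->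
  continuous (fun t => f t * g t).
Proof. by move=> fc gc t; apply: continuousM; [exact: fc | exact: gc]. Qed.

Lemma cont_det k (h : T -> 'M[R]_k) :
  (forall a b, continuous (fun t => h t a b)) -> continuous (fun t => \det (h t)).
Proof.
move=> hc; rewrite /determinant; apply: cont_sum => s.
apply: cont_mul; first exact: cst_continuous.
by apply: cont_prod => a; apply: hc.
Qed.

End Topo.

Lemma cont_sgnf (R : realType) (n i : nat) (Hi : (i <= n)%N) (Hi0 : (0 < i)%N) :
  continuous (fun F : {ptws nat -> 'M[R]_(n.*2)} => sgnf Hi Hi0 (F i)).
Proof.
rewrite /sgnf; apply: cont_mul; apply: cont_det => a b.
- have -> : (fun t : {ptws nat -> 'M[R]_(n.*2)} => mxsub (lo Hi Hi0) (hi Hi Hi0) (t i) a b)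
     = (fun t => t i (lo Hi Hi0 a) (hi Hi Hi0 b)) by apply: funext => t; rewrite mxE.
  move=> t; apply: (@continuous_comp _ _ _ (fun t : {ptws nat -> 'M[R]_(n.*2)} => t i)
     (fun M : 'M[R]_(n.*2) => M (lo Hi Hi0 a) (hi Hi Hi0 b))).
    exact: proj_continuous.
  exact: cont_entry.
- have -> : (fun t : {ptws nat -> 'M[R]_(n.*2)} => mxsub (lo Hi Hi0) (lo Hi Hi0) (t i) a b)
     = (fun t => t i (lo Hi Hi0 a) (lo Hi Hi0 b)) by apply: funext => t; rewrite mxE.
  move=> t; apply: (@continuous_comp _ _ _ (fun t : {ptws nat -> 'M[R]_(n.*2)} => t i)
     (fun M : 'M[R]_(n.*2) => M (lo Hi Hi0 a) (lo Hi Hi0 b))).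
    exact: proj_continuous.
  exact: cont_entry.
Qed.

Theorem mainTheorem11 (R : realType) (n : nat) (Theta : pred nat) :
  (forall i, Theta i -> (1 <= i <= n)%N) ->
  (exists i, Theta i) ->
  (exists i, Theta i /\ odd i) ->
  PropertyI R n Theta.
Proof.
move=> HT _ [i [hT oi]] x Sx Heq.
have /andP[Hi0 Hi] := HT i hT.
set C := connected_component (Sset Theta) x in Heq.
have Cx : C x := connected_component_refl Sx.
have CG : C (Defs.iota Theta x) by rewrite -Heq; exists x.
have SG : Sset Theta (Defs.iota Theta x) := connected_component_sub CG.
have neg := sign_flip Hi Hi0 hT oi Sx SG.
set f := fun F : {ptws nat -> 'M[R]_(n.*2)} => sgnf Hi Hi0 (F i).
have fc : continuous f := @cont_sgnf R n i Hi Hi0.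
have cC : connected (f @` C).
  apply: connected_continuous_connected; first exact: component_connected.
  exact: continuous_subspaceT.
have iI : is_interval (f @` C) by apply/connected_intervalP.
have fx : (f @` C) (f x) by exists x.
have fG : (f @` C) (f (Defs.iota Theta x)) by exists (Defs.iota Theta x).
have nzx : f x != 0 := sgnf_nz Hi Hi0 Sx hT.
have zero : (f @` C) 0.
  rewrite /= -/(f x) -/(f (Defs.iota Theta x)) in neg.
  case: (boolP (f x < 0)) => hx.
    apply: (iI _ _ fx fG); apply/andP; split; first exact: ltW.
    apply: ltW; nra.
  rewrite -leNgt le_eqVlt eq_sym (negbTE nzx) /= in hx.
  apply: (iI _ _ fG fx); apply/andP; split; last exact: ltW.
  apply: ltW; nra.
case: zero => y Cy fy0.
have := sgnf_nz Hi Hi0 (connected_component_sub Cy) hT.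
by rewrite -/(f y) fy0 eqxx.
Qed.
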